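(* Let $\lambda>0$. For every irrational $\alpha$ and every $\theta\in\mathbb{T}_0$, neither $\lambda$ nor $-\lambda$ is an eigenvalue of $\mathcal{H}_\theta$.
   Context: $\mathbb{T}=\mathbb{R}/\mathbb{Z}$, $\mathbb{T}_0=\{\theta\in\mathbb{T}:\cos 2\pi(n\alpha+\theta)\neq 0\ \forall n\in\mathbb{Z}\}$. For $\theta\in\mathbb{T}$, $n\in\mathbb{Z}$ put $v(\theta,n)=\cos2\pi((n-1)\alpha+\theta)$ if $n$ is odd and $v(\theta,n)=\cos 2\pi(n\alpha+\theta)$ if $n$ is even; $c(\theta,n)=\lambda$ if $n$ is odd and $c(\theta,n)=\cos2\pi(n\alpha+\theta)$ if $n$ is even. For $\theta\in\mathbb{T}_0$, $\mathcal{H}_\theta$ acts on $\ell^2(\mathbb{Z})$ by $(\mathcal{H}_\theta u)(n)=c(\theta,n)u(n+1)+c(\theta,n-1)u(n-1)+v(\theta,n)u(n)$. *)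

(* Defs.v *)
From Stdlib Require Import Reals ZArith.
From Coquelicot Require Import Coquelicot.
Open Scope R_scope.

(* T = R/Z: a point theta of T is represented by a real number; all
   quantities below are 1-periodic in theta. *)

Definition T0 (alpha theta : R) : Prop :=
  forall n : Z, cos (2 * PI * (IZR n * alpha + theta)) <> 0.

Definition vpot (alpha theta : R) (n : Z) : R :=
  if Z.odd n then cos (2 * PI * (IZR (n - 1) * alpha + theta))
  else cos (2 * PI * (IZR n * alpha + theta)).

Definition chop (lambda alpha theta : R) (n : Z) : R :=
  if Z.odd n then lambda
  else cos (2 * PI * (IZR n * alpha + theta)).

Definition Hop (lambda alpha theta : R) (u : Z -> C) (n : Z) : C :=
  (RtoC (chop lambda alpha theta n) * u (n + 1)%Z
   + RtoC (chop lambda alpha theta (n - 1)) * u (n - 1)%Z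
   + RtoC (vpot alpha theta n) * u n)%C.

Definition l2Z (u : Z -> C) : Prop :=
  ex_series (fun k : nat => (Cmod (u (Z.of_nat k)))^2 + (Cmod (u (- Z.of_nat k)%Z))^2).

Definition is_eigenvalue (lambda alpha theta E : R) : Prop :=
  exists u : Z -> C, l2Z u /\ (exists n : Z, u n <> 0%C) /\
    forall n : Z, Hop lambda alpha theta u n = (RtoC E * u n)%C.

Definition irrational (x : R) : Prop :=
  ~ exists (p q : Z), q <> 0%Z /\ x = IZR p / IZR q.

(* Main.v *)
Require Import Defs.
From Stdlib Require Import Reals ZArith.
From Coquelicot Require Import Coquelicot.
From Stdlib Require Import Lia Lra.
Open Scope R_scope.

Lemma zconst (f : Z -> R) : (forall m, f (m + 1)%Z = f m) -> forall m, f m = f 0%Z.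
Proof.
  intros H m. induction m using Z.peano_ind.
  - reflexivity.
  - rewrite <- Z.add_1_r, H. exact IHm.
  - rewrite <- IHm. rewrite <- (H (Z.pred m)). f_equal. lia.
Qed.

Lemma small (u : Z -> C) : l2Z u -> forall eps, 0 < eps ->
  exists m : Z, Cmod (u (2*m)%Z) < eps /\ Cmod (u (2*m+1)%Z) < eps.
Proof.
  intros Hl eps Heps.
  apply ex_series_lim_0 in Hl. apply is_lim_seq_spec in Hl.
  assert (He2 : 0 < eps * eps) by nra.
  destruct (Hl (mkposreal _ He2)) as [N HN]. simpl in HN.
  exists (Z.of_nat N). split.
  - specialize (HN (2*N)%nat ltac:(lia)).
    replace (2 * Z.of_nat N)%Z with (Z.of_nat (2*N)) by lia.
    pose proof (Cmod_ge_0 (u (Z.of_nat (2 * N)))).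
    pose proof (Cmod_ge_0 (u (- Z.of_nat (2 * N))%Z)).
    rewrite Rminus_0_r, Rabs_pos_eq in HN by nra. nra.
  - specialize (HN (2*N+1)%nat ltac:(lia)).
    replace (2 * Z.of_nat N + 1)%Z with (Z.of_nat (2*N+1)) by lia.
    pose proof (Cmod_ge_0 (u (Z.of_nat (2 * N+1)))).
    pose proof (Cmod_ge_0 (u (- Z.of_nat (2 * N+1))%Z)).
    rewrite Rminus_0_r, Rabs_pos_eq in HN by nra. nra.
Qed.

Lemma odd_even m : Z.odd (2*m) = false.
Proof. rewrite Z.odd_mul. reflexivity. Qed.
Lemma odd_odd m : Z.odd (2*m+1) = true.
Proof. rewrite Z.odd_add, Z.odd_mul. reflexivity. Qed.

Lemma RtoC_neq0 r : r <> 0 -> RtoC r <> 0%C.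
Proof. intros H E. apply H. injection E. auto. Qed.

Lemma mult_eq0 (a b : C) : a <> 0%C -> (a * b)%C = 0%C -> b = 0%C.
Proof.
  intros Ha Hab. destruct (Ceq_dec b 0) as [|Hb]; auto.
  exfalso. exact (Cmult_neq_0 _ _ Ha Hb Hab).
Qed.

Lemma core lam al th E (sg : C) (u : Z -> C) :
  0 < lam -> T0 al th -> RtoC E = (sg * RtoC lam)%C -> (sg * sg = 1)%C ->
  Cmod sg = 1 -> l2Z u ->
  (forall n, Hop lam al th u n = (RtoC E * u n)%C) -> forall n, u n = 0%C.
Proof.
  intros Hlam HT HE Hss Hsg Hl H.
  set (w := fun m : Z => cos (2 * PI * (IZR (2*m) * al + th))).
  set (K := fun m : Z => (RtoC (w m) * (u (2*m)%Z + u (2*m+1)%Z))%C).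
  assert (E1 : forall m, (RtoC lam * u (2*(m+1))%Z + RtoC (w m) * u (2*m)%Z
                + RtoC (w m) * u (2*m+1)%Z = RtoC E * u (2*m+1)%Z)%C).
  { intro m. specialize (H (2*m+1)%Z). unfold Hop, chop, vpot in H.
    rewrite odd_odd in H.
    replace (2*m+1-1)%Z with (2*m)%Z in H by ring.
    replace (2*m+1+1)%Z with (2*(m+1))%Z in H by ring.
    rewrite odd_even in H. rewrite <- H. unfold w. ring. }
  assert (E0 : forall m, (RtoC (w (m+1)%Z) * u (2*(m+1)+1)%Z + RtoC lam * u (2*m+1)%Z
                + RtoC (w (m+1)%Z) * u (2*(m+1))%Z = RtoC E * u (2*(m+1))%Z)%C).
  { intro m. specialize (H (2*(m+1))%Z). unfold Hop, chop, vpot in H.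
    rewrite odd_even in H.
    replace (2*(m+1)-1)%Z with (2*m+1)%Z in H by ring.
    rewrite odd_odd in H. rewrite <- H. unfold w. ring. }
  assert (Km : forall m, K m = (sg * RtoC lam * u (2*m+1)%Z - RtoC lam * u (2*(m+1))%Z)%C).
  { intro m. rewrite <- HE, <- E1. unfold K. ring. }
  assert (Rec : forall m, K (m+1)%Z = (- sg * K m)%C).
  { intro m. rewrite (Km m).
    assert (K (m+1)%Z = (sg * RtoC lam * u (2*(m+1))%Z - RtoC lam * u (2*m+1)%Z)%C) as ->.
    { rewrite <- HE, <- E0. unfold K. ring. }
    set (b := u (2*m+1)%Z). set (c := u (2*(m+1))%Z).
    transitivity ((sg * RtoC lam * c - RtoC lam * b) - (- sg * (sg * RtoC lam * b - RtoC lam * c))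
                   + (- sg * (sg * RtoC lam * b - RtoC lam * c)))%C; [ring|].
    replace ((sg * RtoC lam * c - RtoC lam * b) - (- sg * (sg * RtoC lam * b - RtoC lam * c)))%C
      with ((sg * sg - 1) * (RtoC lam * b))%C by ring.
    rewrite Hss. ring. }
  assert (Kc : forall m, Cmod (K m) = Cmod (K 0%Z)).
  { apply (zconst (fun m => Cmod (K m))). intro m. rewrite Rec, Cmod_mult, Cmod_opp, Hsg. ring. }
  assert (wle : forall m, Rabs (w m) <= 1) by (intro; apply Rabs_le; apply COS_bound).
  assert (K0 : Cmod (K 0%Z) = 0).
  { destruct (Req_dec (Cmod (K 0%Z)) 0) as [|Hn]; auto. exfalso.
    pose proof (Cmod_ge_0 (K 0%Z)).
    destruct (small u Hl (Cmod (K 0%Z) / 4)) as [m [Ha Hb]]; [lra|].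
    pose proof (Kc m). unfold K at 1 in H1. rewrite Cmod_mult, Cmod_R in H1.
    pose proof (Cmod_triangle (u (2*m)%Z) (u (2*m+1)%Z)).
    pose proof (wle m). pose proof (Rabs_pos (w m)).
    pose proof (Cmod_ge_0 (u (2 * m)%Z + u (2 * m + 1)%Z)). nra. }
  assert (Kz : forall m, K m = 0%C).
  { intro m. apply Cmod_eq_0. rewrite Kc. exact K0. }
  assert (Sz : forall m, (u (2*m)%Z + u (2*m+1)%Z = 0)%C).
  { intro m. apply (mult_eq0 (RtoC (w m))). apply RtoC_neq0. apply HT. apply Kz. }
  assert (Odd : forall m, u (2*m+1)%Z = (- u (2*m)%Z)%C).
  { intro m. transitivity ((u (2*m)%Z + u (2*m+1)%Z) - u (2*m)%Z)%C; [ring|]. rewrite Sz. ring. }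
  assert (Ev : forall m, u (2*(m+1))%Z = (sg * u (2*m+1)%Z)%C).
  { intro m. assert (h : (RtoC lam * (sg * u (2*m+1)%Z - u (2*(m+1))%Z) = 0)%C).
    { rewrite <- (Kz m), Km. ring. }
    apply mult_eq0 in h; [|apply RtoC_neq0; lra].
    transitivity ((sg * u (2*m+1)%Z) - (sg * u (2*m+1)%Z - u (2*(m+1))%Z))%C; [ring|].
    rewrite h. ring. }
  assert (Ec : forall m, Cmod (u (2*m)%Z) = Cmod (u (2*0)%Z)).
  { apply (zconst (fun m => Cmod (u (2*m)%Z))). intro m. rewrite Ev, Odd, Cmod_mult, Cmod_opp, Hsg. ring. }
  assert (U0 : Cmod (u (2*0)%Z) = 0).
  { destruct (Req_dec (Cmod (u (2*0)%Z)) 0) as [|Hn]; auto. exfalso.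
    pose proof (Cmod_ge_0 (u (2*0)%Z)).
    destruct (small u Hl (Cmod (u (2*0)%Z) / 2)) as [m [Ha Hb]]; [lra|].
    rewrite Ec in Ha. lra. }
  assert (Ue : forall m, u (2*m)%Z = 0%C).
  { intro m. apply Cmod_eq_0. rewrite Ec. exact U0. }
  intro n. rewrite (Z.div2_odd n). destruct (Z.odd n); simpl Z.b2z.
  - rewrite Odd, Ue. ring.
  - rewrite Z.add_0_r. apply Ue.
Qed.

Theorem lemma3p4 (lambda alpha theta : R) :
  0 < lambda -> irrational alpha -> T0 alpha theta ->
  ~ is_eigenvalue lambda alpha theta lambda /\
  ~ is_eigenvalue lambda alpha theta (- lambda).
Proof.
  intros Hl _ HT. split; intros [u [Hu [[n Hn] Heq]]]; apply Hn.
  - apply (core lambda alpha theta lambda 1 u); auto.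
    + ring.
    + ring.
    + apply Cmod_1.
  - apply (core lambda alpha theta (- lambda) (- (1)) u); auto.
    + rewrite RtoC_opp. ring.
    + ring.
    + apply Cmod_m1.
Qed.
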